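(* Let $G$ be a $c$-almost-complete graph on $n$ vertices. Then for every integer $m$ with $m\ge3$ and $2c+2\le m\le n$, $G$ contains a cycle of length exactly $m$.
   Context: A graph on $n$ vertices is $c$-almost-complete if its minimum degree is at least $(n-1)-c$. *)

(* Defs.v *)
From mathcomp Require Import all_boot.
Set Implicit Arguments. Unset Strict Implicit. Unset Printing Implicit Defensive.

Definition simple_graph (T : finType) (e : rel T) : Prop :=
  symmetric e /\ irreflexive e.

Definition deg (T : finType) (e : rel T) (v : T) : nat := #|[set u | e v u]|.

(* c-almost-complete: minimum degree at least (n-1) - c, n = #|T|.
   Written as deg v + c >= n - 1 to avoid truncated subtraction. *)
Definition almost_complete (T : finType) (e : rel T) (c : nat) : Prop :=
  forall v : T, #|T| - 1 <= deg e v + c.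

Definition has_cycle_of_length (T : finType) (e : rel T) (m : nat) : Prop :=
  exists s : seq T, [/\ size s = m, 3 <= m, uniq s & cycle e s].

(* Main.v *)
Require Import Defs.
From mathcomp Require Import all_boot.
From mathcomp Require Import zify.
Set Implicit Arguments. Unset Strict Implicit.

Fixpoint pbad {T : finType} (e : rel T) (x : T) (p : seq T) : nat :=
  match p with [::] => 0 | y :: q => (~~ e x y) + pbad e y q end.

Lemma pbad_cat (T : finType) (e : rel T) x p1 p2 :
  pbad e x (p1 ++ p2) = pbad e x p1 + pbad e (last x p1) p2.
Proof. by elim: p1 x => [|y p IH] x //=; rewrite IH addnA. Qed.

Lemma pbad_rcons (T : finType) (e : rel T) x p z :
  pbad e x (rcons p z) = pbad e x p + ~~ e (last x p) z.
Proof. by rewrite -cats1 pbad_cat /= addn0. Qed.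

Lemma pbad_path (T : finType) (e : rel T) x p :
  path e x p = (pbad e x p == 0).
Proof.
elim: p x => [|y p IH] x //=; rewrite IH.
by case: (e x y).
Qed.

Lemma last_rev_belast (T : finType) (z : T) b :
  last (last z b) (rev (belast z b)) = z.
Proof.
have H : rev (z :: b) = last z b :: rev (belast z b) by rewrite lastI rev_rcons.
have := congr1 (last z) H.
by rewrite /= rev_cons last_rcons => <-.
Qed.

Lemma pbad_rev (T : finType) (e : rel T) : symmetric e -> forall y b,
  pbad e (last y b) (rev (belast y b)) = pbad e y b.
Proof.
move=> se y b; elim: b y => [|z b IH] y //=.
rewrite rev_cons pbad_rcons IH last_rev_belast se addnC.
by [].
Qed.

Definition cbad (T : finType) (e : rel T) (s : seq T) :=
  if s is x :: p then pbad e x (rcons p x) else 0.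

Lemma split_bad (T : finType) (e : rel T) x p : 0 < pbad e x p ->
  exists p1 y p2, p = p1 ++ y :: p2 /\ ~~ e (last x p1) y.
Proof.
elim: p x => [|y p IH] x //=.
case exy: (e x y) => /= H.
  have [p1 [z [p2 [-> H2]]]] := IH y H.
  by exists (y :: p1), z, p2.
by exists [::], y, p; rewrite exy.
Qed.

Lemma rot_bad (T : finType) (e : rel T) s : 0 < cbad e s ->
  exists x p, [/\ perm_eq (x :: p) s, cbad e (x :: p) = cbad e s &
                 ~~ e (last x p) x].
Proof.
case: s => [|x p] //=; rewrite pbad_rcons.
case exl: (e (last x p) x); last by move=> _; exists x, p; split; rewrite ?pbad_rcons ?exl.
rewrite addn0 => /split_bad [p1 [y [p2 [Ep H]]]].
exists y, (p2 ++ x :: p1); split.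
- rewrite Ep; rewrite (_ : y :: p2 ++ x :: p1 = (y :: p2) ++ (x :: p1)) // (_ : x :: p1 ++ y :: p2 = (x :: p1) ++ (y :: p2)) //; by rewrite perm_catC.
- rewrite /= Ep !rcons_cat /= !pbad_cat /= !pbad_rcons /= ?last_cat /=.
  have Hl : last x p = last y p2 by rewrite Ep last_cat.
  rewrite -Hl exl /=; lia.
- by rewrite last_cat /=.
Qed.

Lemma last_take (T : finType) (x : T) p k : k <= size p ->
  last x (take k p) = nth x (x :: p) k.
Proof.
elim: p x k => [|y p IH] x [|k] //= Hk.
rewrite IH //; exact: set_nth_default.
Qed.

Lemma swap_bad (T : finType) (e : rel T) x p :
  symmetric e -> irreflexive e -> ~~ e (last x p) x ->
  size (x :: p) <= 2 * count (e x) (x :: p) ->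
  size (x :: p) <= 2 * count (e (last x p)) (x :: p) ->
  exists s', perm_eq s' (x :: p) /\ cbad e s' < cbad e (x :: p).
Proof.
move=> se ie nb HA HB.
set z := last x p in nb HB.
set m1 := size p.
set A := fun k => e x (nth x p k).
set B := fun k => e (nth x (x :: p) k) z.
have cA : count A (iota 0 m1) = count (e x) (x :: p).
  rewrite /= ie add0n -[in RHS](mkseq_nth x p) /mkseq count_map.
  by apply: eq_count.
have cB : count B (iota 0 m1) = count (e z) (x :: p).
  have Hq : x :: p = rcons (belast x p) z by rewrite lastI.
  have sq : size (belast x p) = m1 by rewrite size_belast.
  rewrite Hq -cats1 count_cat /= ie addn0 -[in RHS](mkseq_nth x (belast x p)) /mkseq count_map sq /= addn0.
  apply: eq_in_count => k; rewrite mem_iota add0n => Hk.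
  have Hk2 : k < m1 by case/andP: Hk.
  by rewrite /B Hq nth_rcons sq Hk2 /= se.
have : 0 < count (predI A B) (iota 0 m1).
  have := count_predUI A B (iota 0 m1).
  have := count_size (predU A B) (iota 0 m1).
  rewrite size_iota cA cB; simpl in *; lia.
rewrite -has_count => /hasP [k]; rewrite mem_iota add0n => Hk /andP [Ak Bk].
set a := take k p.
have Ed : drop k p = nth x p k :: drop k.+1 p by apply: drop_nth.
set y := nth x p k in Ak Ed.
set b' := drop k.+1 p.
have Ep : p = a ++ y :: b' by rewrite -Ed cat_take_drop.
have Ez : z = last y b' by rewrite /z {1}Ep last_cat.
have La : last x a = nth x (x :: p) k by apply: last_take; lia.
exists (x :: a ++ rev (y :: b')); split.
  rewrite [in X in perm_eq _ X]Ep perm_cons perm_cat2l perm_rev perm_refl //.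
have -> : cbad e (x :: p) = pbad e x (rcons (a ++ y :: b') x) by rewrite /= -Ep.
rewrite /= !rcons_cat !pbad_cat /= !pbad_rcons.
rewrite (lastI y b') rev_rcons /= last_rev_belast pbad_rev //.
rewrite -Ez La.
have -> : e (nth x (x :: p) k) z by exact: Bk.
rewrite se (_ : e x y) //.
have -> : ~~ e z x by exact: nb.
rewrite /=; lia.
Qed.

Theorem corollary7p2 (T : finType) (e : rel T) (c : nat) :
  simple_graph e -> almost_complete e c ->
  forall m : nat, 3 <= m -> 2 * c + 2 <= m -> m <= #|T| ->
  has_cycle_of_length e m.
Proof.
move=> [se ie] ac m Hm3 Hmc HmT.
set S := take m (enum T).
have sS : size S = m by rewrite size_takel // -cardE.
have uS : uniq S by rewrite take_uniq // enum_uniq.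
have degS : forall v, m <= 2 * count (e v) S.
  move=> v.
  have h1 := count_predC (e v) S.
  have h2 : count (predC (e v)) S <= #|predC (e v)|.
    rewrite -size_filter cardE; apply: uniq_leq_size; first exact: filter_uniq.
    by move=> u; rewrite mem_filter mem_enum => /andP [].
  have h3 : #|e v| + #|predC (e v)| = #|T| by exact: cardC.
  have h4 : deg e v = #|e v| by rewrite /deg; apply: eq_card => u; rewrite inE.
  have h5 := ac v.
  lia.
suff: forall k s, perm_eq s S -> cbad e s <= k -> has_cycle_of_length e m.
  by move/(_ (cbad e S) S (perm_refl S) (leqnn _)).
elim=> [|k IH] s Hs Hk.
- case: s Hs Hk => [|x p] Hs Hk; first by have := perm_size Hs; rewrite sS /=; lia.
  exists (x :: p); split => //.
  + by rewrite (perm_size Hs).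
  + by rewrite (perm_uniq Hs).
  + by rewrite /= pbad_path; move: Hk; rewrite /cbad leqn0.
- case: (posnP (cbad e s)) => [H0|Hpos]; first by apply: (IH s Hs); rewrite H0.
  have [x [p [Hp Hc Hn]]] := rot_bad Hpos.
  have Hp' : perm_eq (x :: p) S by exact: perm_trans Hp Hs.
  have szp : size (x :: p) = m by rewrite (perm_size Hp').
  have HA : size (x :: p) <= 2 * count (e x) (x :: p) by rewrite szp (permP Hp').
  have HB : size (x :: p) <= 2 * count (e (last x p)) (x :: p) by rewrite szp (permP Hp').
  have [s' [Hs' Hlt]] := @swap_bad T e x p se ie Hn HA HB.
  apply: (IH s'); first exact: perm_trans Hs' Hp'.
  rewrite Hc in Hlt; exact: leq_trans Hlt Hk.
Qed.
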